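(* A tree $T$ has no full star-cutset if and only if $T$ is a path on at most $4$ vertices. A chandelier has no full star-cutset if and only if it is a luxury chandelier.
   Context: A full star-cutset of a connected graph $G$ is a set $N[u]=\{u\}\cup N(u)$ whose removal disconnects $G$ ($u$ is its center). A chandelier is a graph obtained from a tree $T$ by adding a new vertex adjacent to every leaf of $T$; it is a luxury chandelier if in $T$ the neighbor of each leaf has degree two. *)

(* Defs.v *)
(* finite simple graphs as symmetric irreflexive relations. *)
From mathcomp Require Import all_boot.
Set Implicit Arguments. Unset Strict Implicit. Unset Printing Implicit Defensive.

Section Graphs.
Variable V : finType.
Implicit Types (e : rel V) (A : {set V}).

Definition restrict e A : rel V := fun x y => [&& x \in A, y \in A & e x y].

Definition conn_in e A : Prop :=
  forall x y, x \in A -> y \in A -> connect (restrict e A) x y.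

Definition acyclic_in e A : Prop :=
  forall s : seq V, all (mem A) s -> uniq s -> 3 <= size s -> ~~ cycle e s.

Definition tree_in e A : Prop := A != set0 /\ conn_in e A /\ acyclic_in e A.

Definition deg_in e A (x : V) : nat := #|[set y in A | e x y]|.

Definition leaf_in e A (x : V) : bool := (x \in A) && (deg_in e A x == 1).

Definition cnbhd e (u : V) : {set V} := [set v | (v == u) || e u v].

Definition has_full_star_cutset e : Prop :=
  exists u x y, [/\ x \notin cnbhd e u, y \notin cnbhd e u &
     ~~ connect (restrict e (~: cnbhd e u)) x y].

Definition is_path_le4 e : Prop :=
  exists n, exists f : 'I_n -> V, [/\ n <= 4, bijective f &
     forall i j : 'I_n, e (f i) (f j) = ((i.+1 == j) || (j.+1 == i))%N].

Definition chandelier e (c : V) : Prop :=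
  [/\ tree_in e (~: [set c]), 3 <= #|~: [set c]|, ~~ e c c &
      forall v, v != c -> e c v = leaf_in e (~: [set c]) v].

Definition luxury_chandelier e (c : V) : Prop :=
  chandelier e c /\
  forall l w, leaf_in e (~: [set c]) l -> w \in ~: [set c] -> e l w ->
     deg_in e (~: [set c]) w = 2.

End Graphs.

(* Main.v *)
Require Import Defs.
From mathcomp Require Import all_boot zify.
Set Implicit Arguments. Unset Strict Implicit. Unset Printing Implicit Defensive.

Lemma restrict_sub (V:finType) (e:rel V) (A B : {set V}) :
  {subset A <= B} -> subrel (restrict e A) (restrict e B).
Proof. by move=> sAB x y /and3P[xA yA exy]; apply/and3P; split=> //; apply: sAB. Qed.

Lemma connect_rsub (V:finType) (e:rel V) (A B : {set V}) x y :
  {subset A <= B} -> connect (restrict e A) x y -> connect (restrict e B) x y.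
Proof. by move=> sAB; apply: connect_sub => u v /(restrict_sub sAB) ?; apply: connect1. Qed.

Lemma path_rin (V:finType) (e:rel V) (A:{set V}) x s : path (restrict e A) x s -> {subset s <= A}.
Proof.
elim: s x => //= y s IH x /andP[/and3P[_ yA _] /IH H] z; rewrite inE => /orP[/eqP->|/H] //.
Qed.

Lemma path_re (V:finType) (e:rel V) (A:{set V}) x s : path (restrict e A) x s -> path e x s.
Proof. by apply: sub_path => u v /and3P[]. Qed.

Lemma uniq_connect (T:finType) (r:rel T) x y : connect r x y ->
  exists2 p, path r x p & uniq (x::p) /\ last x p = y.
Proof. by case/connectP=> p pth ->; case/shortenP: pth => p' pth' up' _; exists p'. Qed.

Lemma deg2 (V:finType) (e:rel V) (A:{set V}) v a b : a \in A -> b \in A -> e v a -> e v b -> a != b ->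
  1 < deg_in e A v.
Proof. move=> aA bA ea eb ab; apply/card_gt1P; exists a, b; by rewrite !inE aA bA ea eb. Qed.

Lemma deg_ex (V:finType) (e:rel V) (A:{set V}) v p : p \in A -> e v p -> deg_in e A v != 1 ->
  exists2 z, z \in A & e v z /\ z != p.
Proof.
move=> pA ep d1.
have : 1 < deg_in e A v.
  have : 0 < deg_in e A v by apply/card_gt0P; exists p; rewrite inE pA ep.
  by move: d1; case: (deg_in e A v) => [|[|]].
case/card_gt1P=> a [b [ain bin ab]]; move: ain bin; rewrite !inE => /andP[aA ea] /andP[bA eb].
case: (eqVneq a p) => [ap|ap]; last by exists a.
by exists b => //; split=> //; rewrite -ap eq_sym.
Qed.

Lemma split_mem (T:eqType) (z:T) s : z \in s -> exists t1 t2, s = t1 ++ z :: t2.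
Proof. by case/splitPr=> t1 t2; exists t1, t2. Qed.

Lemma sorted_suffix (T:eqType) (r:rel T) s1 s2 : sorted r (s1 ++ s2) -> sorted r s2.
Proof. elim: s1 => //= x s1 IH H; apply: IH; exact: path_sorted H. Qed.

Lemma size_in (V:finType) (A:{set V}) s : uniq s -> {subset s <= A} -> size s <= #|A|.
Proof. move=> us sA; rewrite -(card_uniqP us); apply: subset_leq_card; exact/subsetP. Qed.

Lemma closed_conn (T:finType) (r:rel T) (S : pred T) x y :
  (forall a b, S a -> r a b -> S b) -> connect r x y -> S x -> S y.
Proof.
move=> cl /connectP[p pth ->]; elim: p x pth => //= z p IH x /andP[rxz pz] Sx.
apply: IH pz _; exact: cl rxz.
Qed.

Lemma neq_e (V:finType) (e:rel V) x y : irreflexive e -> e x y -> x != y.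
Proof. by move=> ir exy; apply/eqP=> E; move: exy; rewrite E ir. Qed.

Lemma triangle (V:finType) (e:rel V) (A:{set V}) w a b : symmetric e -> irreflexive e ->
  acyclic_in e A -> w \in A -> a \in A -> b \in A -> e w a -> e w b -> a != b -> ~~ e a b.
Proof.
move=> sy ir ac wA aA bA ea eb ab; apply/negP=> eab.
have := ac [:: w; a; b]; rewrite /= wA aA bA !inE negb_or (neq_e ir ea) (neq_e ir eb) ab.
by rewrite /= ea eab sy eb => /(_ isT isT isT).
Qed.

Lemma separation (V:finType) (e:rel V) (A:{set V}) w a b : symmetric e -> irreflexive e ->
  acyclic_in e A -> w \in A -> a \in A -> b \in A -> e w a -> e w b -> a != b ->
  ~~ connect (restrict e (A :\ w)) a b.
Proof.
move=> sy ir ac wA aA bA ea eb ab; apply/negP.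
case/uniq_connect=> p pth [up lp].
have sA := path_rin pth; have pe := path_re pth.
have wp : w \notin a :: p.
  rewrite inE negb_or (neq_e ir ea) /=; apply/negP=> /sA; by rewrite !inE eqxx.
have := ac (w :: a :: p).
have -> : all (mem A) (w :: a :: p).
  rewrite /= wA aA /=; apply/allP=> z /sA; rewrite !inE => /andP[].
  by [].
rewrite /= -/(uniq (a::p)) up andbT wp; case: p pth up lp sA pe wp => [|q p] pth up lp sA pe wp.
  by move: ab; rewrite /= -lp eqxx.
move=> /(_ isT isT isT); rewrite /= ea /=.
rewrite -[e a q && _]/(path e a (rcons (q::p) w)) rcons_path pe /=; move: lp => /= ->; rewrite sy eb.
by [].
Qed.

Lemma conn_remove (V:finType) (e:rel V) (A R : {set V}) : symmetric e ->
  {subset R <= A} ->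
  (forall v, v \in A -> v \notin R -> deg_in e A v <= 1) -> conn_in e A -> conn_in e R.
Proof.
move=> sy sRA dg cA x y xR yR.
have [p pth [up lp]] := uniq_connect (cA x y (sRA _ xR) (sRA _ yR)).
apply/connectP; exists p => //; rewrite -lp in yR; clear lp.
elim: p x xR pth up yR => //= z p IH x xR /andP[/and3P[xA zA exz] pz] /andP[xn up] lR.
have zR : z \in R.
  case: p IH pz up lR xn => [|z2 p] IH pz up lR xn; first by [].
  apply/negPn/negP=> zn; have := dg z zA zn.
  move: pz => /= /andP[/and3P[_ z2A ezz2] _].
  have : x != z2 by move: xn; rewrite !inE negb_or => /andP[_]; rewrite negb_or => /andP[].
  rewrite sy in exz.
  by move=> /(deg2 xA z2A exz ezz2); rewrite ltnNge => /negP.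
rewrite /restrict xR zR exz /=; exact: IH.
Qed.

Lemma arith1 a b k : a - b <= k.+1 -> b + 2 < a -> a - (b + 1) <= k.
Proof. lia. Qed.

Lemma arith0 a b : a - b <= 0 -> b + 2 < a -> False.
Proof. lia. Qed.

Lemma cyc (V:finType) (e:rel V) (A:{set V}) h s : acyclic_in e A ->
  {subset h::s <= A} -> uniq (h::s) -> 2 <= size s -> path e h s -> e (last h s) h -> False.
Proof.
move=> ac sA us ss ps el; have := ac (h::s).
have -> : all (mem A) (h :: s) by apply/allP=> z /sA.
by rewrite us /= ltnS ss rcons_path ps el => /(_ isT isT isT).
Qed.

Lemma walk_leaf (V:finType) (e:rel V) (A:{set V}) u : symmetric e -> irreflexive e ->
  acyclic_in e A -> u \in A ->
  forall k m p x, #|A| - size m <= k ->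
  path (restrict e A) u (m ++ [:: p; x]) -> uniq (u :: m ++ [:: p; x]) ->
  exists l, [/\ leaf_in e A l, l \in ~: cnbhd e u & connect (restrict e (~: cnbhd e u)) x l].
Proof.
move=> sy ir ac uA; elim=> [|k IH] m p x hk pth un;
  (have sA : {subset u :: m ++ [:: p; x] <= A} by
    move=> z; rewrite inE => /orP[/eqP->//|/(path_rin pth)]);
  have sz := size_in un sA; rewrite /= size_cat /= in sz;
  first by exfalso; exact: arith0 hk sz.
have pe := path_re pth.
have lx : last u (m ++ [:: p; x]) = x by rewrite last_cat.
have xN : x \in ~: cnbhd e u.
  rewrite !inE negb_or; apply/andP; split.
    apply/negP=> /eqP xu; move: un; rewrite /= xu mem_cat !inE eqxx !orbT.
    by [].
  apply/negP=> eux; apply: (cyc ac sA un) => //; first by rewrite size_cat /= addn2.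
  by rewrite lx sy.
have pA : p \in A by apply: sA; rewrite !inE mem_cat !inE eqxx !orbT.
have epx : e x p.
  by move: pe; rewrite cat_path /= => /and3P[_ _ /andP[H _]]; rewrite sy.
case: (boolP (leaf_in e A x)) => lf.
  by exists x; split=> //.
have xA : x \in A by apply: sA; rewrite !inE mem_cat !inE eqxx !orbT.
have d1 : deg_in e A x != 1 by move: lf; rewrite /leaf_in xA.
have [z zA [exz zp]] := deg_ex pA epx d1.
have zn : z \notin u :: m ++ [:: p; x].
  have zm : z \notin u :: m.
    apply/negP=> /split_mem [t1 [t2 E]].
    have E2 : u :: m ++ [:: p; x] = t1 ++ z :: (t2 ++ [:: p; x]) by rewrite -cat_cons E -catA.
    have pe' : sorted e (t1 ++ z :: (t2 ++ [:: p; x])) by rewrite -E2.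
    have un2 := un; rewrite E2 in un2.
    apply: (cyc (h:=z) (s:=t2 ++ [::p;x]) ac).
    - by move=> y yi; apply: sA; rewrite E2 mem_cat yi orbT.
    - by move: un2; rewrite cat_uniq => /and3P[_ _ ->].
    - by rewrite size_cat /= addn2.
    - exact: (sorted_suffix pe').
    - by rewrite last_cat.
  rewrite -cat_cons mem_cat negb_or zm /= !inE negb_or zp /= eq_sym.
  exact: neq_e ir exz.
have pth' : path (restrict e A) u ((m ++ [:: p]) ++ [:: x; z]).
  have -> : (m ++ [:: p]) ++ [:: x; z] = (m ++ [:: p; x]) ++ [:: z] by rewrite -!catA.
  by rewrite cat_path pth lx /= /restrict xA zA exz.
have un' : uniq (u :: (m ++ [:: p]) ++ [:: x; z]).
  have -> : u :: (m ++ [:: p]) ++ [:: x; z] = rcons (u :: m ++ [:: p; x]) z.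
    by rewrite -cats1 /= -!catA.
  by rewrite rcons_uniq zn un.
have hk' : #|A| - size (m ++ [:: p]) <= k by rewrite size_cat /=; exact: arith1 hk sz.
have [l [ll lN cl]] := IH _ _ _ hk' pth' un'.
exists l; split => //.
apply: connect_trans cl; apply: connect1; rewrite /restrict xN exz andbT /=.
rewrite !inE negb_or; apply/andP; split.
  by apply/negP=> /eqP zu; move: zn; rewrite zu inE eqxx.
apply/negP=> euz.
have sA' : {subset u :: (m ++ [:: p]) ++ [:: x; z] <= A}.
  by move=> y; rewrite inE => /orP[/eqP->//|/(path_rin pth')].
apply: (cyc ac sA' un') => //; first by rewrite !size_cat /= !addn2.
  exact: path_re pth'.
by rewrite last_cat /= sy.
Qed.

Lemma deg1_uniq (V:finType) (e:rel V) (A:{set V}) v a b : deg_in e A v <= 1 ->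
  a \in A -> b \in A -> e v a -> e v b -> a = b.
Proof.
move=> d aA bA ea eb; apply/eqP/negPn/negP=> ab.
by move: (deg2 aA bA ea eb ab); rewrite ltnNge d.
Qed.

Lemma notinN (V:finType) (e:rel V) u v : (v \in ~: cnbhd e u) = (v != u) && ~~ e u v.
Proof. by rewrite !inE negb_or. Qed.

Lemma restrict_sym (V:finType) (e:rel V) (A:{set V}) : symmetric e -> symmetric (restrict e A).
Proof. by move=> sy x y; rewrite /restrict sy andbCA. Qed.

Lemma card3 (V:finType) (A:{set V}) l w : 3 <= #|A| -> exists2 z, z \in A & (z != l) && (z != w).
Proof.
move=> c3; have : ~~ (A \subset [set l; w]).
  apply/negP=> /subset_leq_card; rewrite cards2; move: c3; case: (l != w) => /=; lia.
case/subsetPn=> z zA; rewrite !inE negb_or => zn; by exists z.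
Qed.

Lemma part2 (V:finType) (e:rel V) (c:V) : symmetric e -> irreflexive e -> chandelier e c ->
  (~ has_full_star_cutset e <-> luxury_chandelier e c).
Proof.
move=> sy ir ch; have [[A0 [cA ac]] c3 _ ech] := ch.
set A := ~: [set c] in A0 cA ac c3 ech *.
have inA : forall v, (v \in A) = (v != c) by move=> v; rewrite !inE.
split.
- move=> ncut; split=> // l w ll wA elw.
  have lA : l \in A by case/andP: ll.
  have dl : deg_in e A l <= 1 by case/andP: ll => _ /eqP->.
  case: (ltngtP (deg_in e A w) 2) => // [lt2|gt2].
  + have dw : deg_in e A w <= 1 by lia.
    have [z zA zn] := card3 l w c3.
    have := closed_conn (S := [pred v | (v == l) || (v == w)]) _ (cA l z lA zA).
    rewrite /= eqxx (negbTE (proj1 (andP zn))) (negbTE (proj2 (andP zn))) => H.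
    have : false.
      apply: H => //= a b /orP[]/eqP-> /and3P[_ bA eb]; apply/orP.
      * by right; apply/eqP; exact: (deg1_uniq dl bA wA eb elw).
      * by left; apply/eqP; rewrite sy in elw; exact: (deg1_uniq dw bA lA eb elw).
    by [].
  + exfalso; apply: ncut.
    set S := [set y in A | e w y].
    have lS : l \in S by rewrite inE lA sy.
    have : 1 < #|S :\ l| by move: gt2; rewrite /deg_in -/S (cardsD1 l S) lS; lia.
    case/card_gt1P=> a [b [aS bS ab]]; move: aS bS; rewrite !inE -!inA.
    case/andP=> al /andP[aA ea]; case/andP=> bl /andP[bA eb].
    have ewl : e w l by rewrite sy.
    have la : ~~ e l a by apply: (triangle sy ir ac wA lA aA ewl ea); rewrite eq_sym.
    have lb : ~~ e l b by apply: (triangle sy ir ac wA lA bA ewl eb); rewrite eq_sym.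
    exists l, a, b; split; first by rewrite -in_setC notinN al la.
      by rewrite -in_setC notinN bl lb.
    apply/negP=> cn; have := separation sy ir ac wA aA bA ea eb ab;
    move/negP; apply. apply: (connect_rsub _ cn) => v; rewrite notinN => /andP[vl evl].
    rewrite !inE; apply/andP; split.
      by apply/eqP=> vw; move: evl; rewrite vw elw.
    apply/eqP=> vc; move: evl; rewrite vc sy ech ?ll //.
    by rewrite -inA.
- case=> _ lux [u [x [y [xn yn]]]]; apply/negP/negPn.
  rewrite -in_setC in xn; rewrite -in_setC in yn.
  have ecl : forall v, v \in A -> e c v = leaf_in e A v by move=> v; rewrite inA; exact: ech.
  case: (eqVneq u c) => [uc|uc].
  +
    subst u.
    set R := [set v in A | ~~ leaf_in e A v].
    have sR : {subset R <= A} by move=> v; rewrite inE => /andP[].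
    have cR : conn_in e R.
      apply: (conn_remove sy sR _ cA) => v vA; rewrite inE vA /= negbK => /andP[_ /eqP->].
      by [].
    have inR : forall v, v \in ~: cnbhd e c -> v \in R.
      move=> v; rewrite notinN => /andP[vc ecv]; have vA : v \in A by rewrite inA.
      by rewrite inE vA -ecl.
    apply: (connect_rsub _ (cR x y (inR _ xn) (inR _ yn))) => v vR.
    have vA := sR _ vR; rewrite notinN -inA vA ecl //.
    by move: vR; rewrite inE => /andP[].
  + have uA : u \in A by rewrite inA.
    case: (boolP (leaf_in e A u)) => lu.
    * have du : deg_in e A u <= 1 by case/andP: lu => _ /eqP->.
      have [w] : exists w, w \in [set y in A | e u y].
        by apply/card_gt0P; case/andP: lu => _ /eqP; rewrite /deg_in => ->.
      rewrite inE => /andP[wA euw].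
      have wu : forall v, v \in A -> e u v -> v = w.
        by move=> v vA euv; exact: (deg1_uniq du vA wA euv euw).
      have d2 := lux u w lu wA euw.
      set A1 := A :\ u; set A2 := A1 :\ w.
      have sA1 : {subset A1 <= A} by move=> v; rewrite in_setD1 => /andP[].
      have sA2 : {subset A2 <= A1} by move=> v; rewrite in_setD1 => /andP[].
      have cA1 : conn_in e A1.
        apply: (conn_remove sy sA1 _ cA) => v vA; rewrite in_setD1 vA andbT negbK => /eqP->.
        by [].
      have cA2 : conn_in e A2.
        apply: (conn_remove sy sA2 _ cA1) => v vA; rewrite in_setD1 vA andbT negbK => /eqP->.
        set S := [set y in A | e w y].
        have uS : u \in S by rewrite inE uA sy.
        have cS : #|S :\ u| = 1 by move: d2; rewrite /deg_in -/S (cardsD1 u S) uS add1n => -[].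
        rewrite /deg_in -cS; apply: subset_leq_card; apply/subsetP=> t.
        by rewrite !inE; case/andP=> /andP[-> ->] ->.
      have ecu : e u c by rewrite sy ech // eq_sym.
      have inA2 : forall v, v \in ~: cnbhd e u -> v \in A2.
        move=> v; rewrite notinN => /andP[vu euv].
        rewrite !in_setD1 vu inA; apply/andP; split.
          by apply/eqP=> vw; move: euv; rewrite vw euw.
        by apply/eqP=> vc; move: euv; rewrite vc ecu.
      apply: (connect_rsub _ (cA2 x y (inA2 _ xn) (inA2 _ yn))) => v.
      rewrite !in_setD1 notinN => /and3P[vw vu vA]; rewrite vu /=.
      by apply/negP=> /(wu _ vA) /eqP; rewrite (negbTE vw).
    * have cN : c \in ~: cnbhd e u by rewrite notinN eq_sym uc sy ech // eq_sym.
      have toc : forall v, v \in ~: cnbhd e u -> connect (restrict e (~: cnbhd e u)) v c.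
        move=> v vN; case: (eqVneq v c) => [->//|vc].
        have vA : v \in A by rewrite inA.
        move: vN; rewrite notinN => /andP[vu euv].
        have [q pth [uq lq]] := uniq_connect (cA u v uA vA).
        case/lastP: q pth uq lq => [|q v'] pth uq lq.
          by move: vu; rewrite -lq eqxx.
        rewrite last_rcons in lq; subst v'.
        case/lastP: q pth uq => [|m p] pth uq.
          by move: euv; rewrite /= in pth; case/andP: pth => /and3P[_ _ ->].
        have E : rcons (rcons m p) v = m ++ [:: p; v] by rewrite -!cats1 -catA.
        rewrite E in pth uq.
        have [l [ll lN cl]] := walk_leaf sy ir ac uA (leqnn _) pth uq.
        apply: connect_trans cl _; apply: connect1; rewrite /restrict lN cN /=.
        have lA : l \in A by case/andP: ll.
        by rewrite sy ech // -inA.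
      apply: connect_trans (toc _ xn) _.
      by rewrite (sym_connect_sym (restrict_sym (~: cnbhd e u) sy)); apply: toc.
Qed.

Lemma arithP n (i j k : nat) : n <= 4 -> i < n -> j < n -> k < n ->
  ~~ [|| j == i, i.+1 == j | j.+1 == i] -> ~~ [|| k == i, i.+1 == k | k.+1 == i] ->
  [|| j == k, j.+1 == k | k.+1 == j].
Proof. lia. Qed.

Lemma part1b (V:finType) (e:rel V) : is_path_le4 e -> ~ has_full_star_cutset e.
Proof.
case=> n [f [n4 [g fK gK] ef]] [u [x [y [xn yn nc]]]].
move: nc => /negP; apply.
rewrite -(gK u) -(gK x) -(gK y) in xn yn *.
set i := g u in xn yn *; set j := g x in xn yn *; set k := g y in xn yn *.
have inN : forall a b : 'I_n, (f b \in cnbhd e (f a)) = [|| nat_of_ord b == a, a.+1 == b | b.+1 == a].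
  by move=> a b; rewrite inE ef (inj_eq (can_inj fK)).
rewrite inN in xn; rewrite inN in yn.
have := arithP n4 (ltn_ord i) (ltn_ord j) (ltn_ord k) xn yn.
case/or3P => [/eqP/val_inj -> | H | H]; first exact: connect0.
  by apply: connect1; rewrite /restrict !in_setC !inN (negbTE xn) (negbTE yn) ef H.
by apply: connect1; rewrite /restrict !in_setC !inN (negbTE xn) (negbTE yn) ef H orbT.
Qed.

Lemma noDeg3 (V:finType) (e:rel V) : symmetric e -> irreflexive e -> acyclic_in e [set: V] ->
  ~ has_full_star_cutset e -> forall w a b d, e w a -> e w b -> e w d ->
  a != b -> a != d -> b != d -> False.
Proof.
move=> sy ir ac nc w a b d ea eb ed ab ad bd; apply: nc; exists a, b, d.
have T := in_setT.
have nab : ~~ e a b by exact: (triangle sy ir ac (T _ w) (T _ a) (T _ b) ea eb ab).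
have nad : ~~ e a d by exact: (triangle sy ir ac (T _ w) (T _ a) (T _ d) ea ed ad).
split; rewrite ?inE ?negb_or ?nab ?nad ?(eq_sym b) ?(eq_sym d) ?ab ?ad //.
apply/negP=> cn; have := separation sy ir ac (T _ w) (T _ b) (T _ d) eb ed bd.
move/negP; apply; apply: (connect_rsub _ cn) => v; rewrite !inE negb_or => /andP[va eav].
by rewrite ?inE ?andbT; apply/eqP=> vw; move: eav; rewrite vw sy ea.
Qed.

Lemma noP5 (V:finType) (e:rel V) : symmetric e -> irreflexive e -> acyclic_in e [set: V] ->
  ~ has_full_star_cutset e -> forall v0 v1 v2 v3 v4,
  uniq [:: v0; v1; v2; v3; v4] -> path e v0 [:: v1; v2; v3; v4] -> False.
Proof.
move=> sy ir ac nc v0 v1 v2 v3 v4 un /= /and5P[e01 e12 e23 e34 _].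
move: un => /= /andP[H0 /andP[H1 /andP[H2 /andP[H3 _]]]].
move: H0 H1 H2 H3; rewrite !inE !negb_or => /and4P[n01 n02 n03 n04] /and3P[n12 n13 n14]
  /andP[n23 n24] n34.
have T := in_setT.
have n20 : ~~ e v2 v0.
  have e10 : e v1 v0 by rewrite sy.
  by apply: (triangle sy ir ac (T _ v1) (T _ v2) (T _ v0) e12 e10); rewrite eq_sym.
have n24' : ~~ e v2 v4.
  have e32 : e v3 v2 by rewrite sy.
  exact: (triangle sy ir ac (T _ v3) (T _ v2) (T _ v4) e32 e34 n24).
apply: nc; exists v2, v0, v4; split.
- by rewrite !inE negb_or n20 n02.
- by rewrite !inE negb_or n24' eq_sym n24.
apply/negP=> cn.
have := separation sy ir ac (T _ v2) (T _ v1) (T _ v3) _ e23 n13; rewrite sy e12 => /(_ isT).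
move/negP; apply.
have sub : {subset ~: cnbhd e v2 <= [set: V] :\ v2}.
  by move=> v; rewrite !inE negb_or andbT => /andP[].
apply: (connect_trans (y := v0)).
  by apply: connect1; rewrite /restrict !inE !andbT n12 n02 sy.
apply: (connect_trans (connect_rsub sub cn)).
by apply: connect1; rewrite /restrict !inE !andbT eq_sym n24 eq_sym n23 sy.
Qed.

Lemma crossing (T:finType) (r: rel T) (S: {pred T}) x y : connect r x y -> x \notin S -> y \in S ->
  exists z y', [/\ z \notin S, y' \in S & r z y'].
Proof.
move=> cxy xn yS.
case: (boolP [exists z, exists y', (z \notin S) && (y' \in S) && r z y']).
  by case/existsP=> z /existsP[y' /andP[/andP[? ?] ?]]; exists z, y'.
rewrite negb_exists => /forallP H.
have H2 : forall a b, a \notin S -> r a b -> b \notin S.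
  move=> a b an rab; apply/negP=> bS.
  by move: (H a); rewrite negb_exists => /forallP /(_ b); rewrite an bS rab.
have := closed_conn (S := [pred v | v \notin S]) H2 cxy xn.
by rewrite /= yS.
Qed.

Lemma mkpath (V:finType) (e:rel V) (s : seq V) x0 : uniq s -> (forall v, v \in s) -> size s <= 4 ->
  (forall i j, i < size s -> j < size s -> e (nth x0 s i) (nth x0 s j) = (i.+1 == j) || (j.+1 == i)) ->
  is_path_le4 e.
Proof.
move=> us cov s4 ed; exists (size s), (fun i : 'I_(size s) => nth x0 s i); split=> //.
  apply: inj_card_bij.
    by move=> i j /eqP; rewrite nth_uniq // => /eqP/val_inj.
  rewrite card_ord -(card_uniqP us); apply: subset_leq_card; apply/subsetP=> v _; exact: cov.
by move=> i j; rewrite ed.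
Qed.

Definition okp (V:finType) (e:rel V) (s : seq V) := if s is x :: p then path e x p && uniq s else false.

Lemma maxpath (V:finType) (e:rel V) : [set: V] != set0 ->
  exists s, okp e s /\ forall s', okp e s' -> size s' <= size s.
Proof.
move=> A0.
pose P n := [exists t : n.-tuple V, okp e t].
have exP : exists n, P n.
  case/set0Pn: A0 => v _; exists 1; apply/existsP; exists [tuple v]; by [].
have ubP : forall n, P n -> n <= #|V|.
  move=> n /existsP[[t sz] /= okt]; rewrite -(eqP sz) -cardsT.
  have ut : uniq t by move: okt; case: t {sz} => //= x p /andP[].
  by apply: size_in ut _ => v _; rewrite in_setT.
case: (ex_maxnP exP ubP) => n /existsP[t okt] mx.
exists t; split=> // s' oks'; rewrite size_tuple; apply: mx; apply/existsP.
by exists (in_tuple s').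
Qed.

Ltac bsolve sy := rewrite /= ?inE ?negb_or; repeat (apply/andP; split); try done; try (by rewrite eq_sym); try (by rewrite sy).

Ltac edge e sy ir := match goal with
 | |- e ?x ?x = _ => by rewrite ir
 | H : is_true (e ?x ?y) |- e ?x ?y = _ => by rewrite H
 | H : is_true (e ?y ?x) |- e ?x ?y = _ => by rewrite sy H
 | H : is_true (~~ e ?x ?y) |- e ?x ?y = _ => by rewrite (negbTE H)
 | H : is_true (~~ e ?y ?x) |- e ?x ?y = _ => by rewrite sy (negbTE H)
 end.

Lemma part1f (V:finType) (e:rel V) : symmetric e -> irreflexive e -> tree_in e [set: V] ->
  ~ has_full_star_cutset e -> is_path_le4 e.
Proof.
move=> sy ir [A0 [cA ac]] nc.
have D3 := noDeg3 sy ir ac nc; have P5 := noP5 sy ir ac nc.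
have [s [oks mxs]] := maxpath e A0.
have cross : forall v, v \notin s -> exists z y', [/\ z \notin s, y' \in s & e z y'].
  move=> v; case: s oks mxs => // a p _ _ vn.
  apply: (crossing (x := v) (y := a)) => //; last by rewrite inE eqxx.
  have := cA v a (in_setT _) (in_setT _).
  by apply: connect_sub => u w /and3P[_ _ euw]; apply: connect1.
case: s oks mxs cross => [//|a [|b [|c [|d [|f r]]]]] oks mxs cross.
- have cov : forall v, v \in [:: a].
    move=> v; apply/negPn/negP => /cross [z [y' [zn ys ezy]]].
    move: ys zn; rewrite !inE => /eqP E za; subst y'.
    have H : okp e [:: z; a] by rewrite /okp; bsolve sy.
    by have := mxs _ H.
  apply: (mkpath (x0 := a) _ cov) => //.
  by move=> [|i] [|j] //= _ _; edge e sy ir.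
- move: oks; rewrite /= ?inE ?negb_or.
  case/and3P=> [/andP[eab _] nab _].
  have cov : forall v, v \in [:: a; b].
    move=> v; apply/negPn/negP => /cross [z [y' [zn ys ezy]]].
    move: ys zn; rewrite !inE !negb_or => /orP[] /eqP E /andP[za zb]; subst y'.
    - have H : okp e [:: z; a; b] by rewrite /okp; bsolve sy.
      by have := mxs _ H.
    - have H : okp e [:: a; b; z] by rewrite /okp; bsolve sy.
      by have := mxs _ H.
  apply: (mkpath (x0 := a) _ cov) => //; first by bsolve sy.
  by move=> [|[|i]] [|[|j]] //= _ _; edge e sy ir.
- move: oks; rewrite /= ?inE ?negb_or.
  case/and4P=> [/and3P[eab ebc _] /andP[nab nac] nbc _].
  have T := in_setT.
  have nac' : ~~ e a c.
    by apply: (triangle sy ir ac (T _ b) (T _ a) (T _ c)); bsolve sy.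
  have cov : forall v, v \in [:: a; b; c].
    move=> v; apply/negPn/negP => /cross [z [y' [zn ys ezy]]].
    move: ys zn; rewrite !inE !negb_or => /or3P[] /eqP E /and3P[za zb zc]; subst y'.
    - have H : okp e [:: z; a; b; c] by rewrite /okp; bsolve sy.
      by have := mxs _ H.
    - by apply: (D3 b a c z); bsolve sy.
    - have H : okp e [:: a; b; c; z] by rewrite /okp; bsolve sy.
      by have := mxs _ H.
  apply: (mkpath (x0 := a) _ cov) => //; first by bsolve sy.
  by move=> [|[|[|i]]] [|[|[|j]]] //= _ _; edge e sy ir.
- move: oks; rewrite /= !inE !negb_or.
  case/and5P=> [/and4P[eab ebc ecd _] /and3P[nab nac nad] /andP[nbc nbd] ncd _].
  have T := in_setT.
  have nac' : ~~ e a c.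
    by apply: (triangle sy ir ac (T _ b) (T _ a) (T _ c)); bsolve sy.
  have nbd' : ~~ e b d.
    by apply: (triangle sy ir ac (T _ c) (T _ b) (T _ d)); bsolve sy.
  have nad' : ~~ e a d.
    apply/negP=> ead; have := ac [:: a; b; c; d].
    have -> : all (mem [set: V]) [:: a; b; c; d] by apply/allP=> ? _; exact: in_setT.
    have -> : uniq [:: a; b; c; d] by bsolve sy.
    by rewrite /= eab ebc ecd (sy d a) ead => /(_ isT isT isT).
  have cov : forall v, v \in [:: a; b; c; d].
    move=> v; apply/negPn/negP => /cross [z [y' [zn ys ezy]]].
    move: ys zn; rewrite !inE !negb_or => /or4P[] /eqP E /and4P[za zb zc zd]; subst y'.
    - by apply: (P5 z a b c d); bsolve sy.
    - by apply: (D3 b a c z); bsolve sy.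
    - by apply: (D3 c b d z); bsolve sy.
    - by apply: (P5 a b c d z); bsolve sy.
  apply: (mkpath (x0 := a) _ cov) => //; first by bsolve sy.
  by move=> [|[|[|[|i]]]] [|[|[|[|j]]]] //= _ _; edge e sy ir.
- case/andP: oks => pth un; exfalso; apply: (P5 a b c d f).
    by move: un; rewrite -[[:: a, b, c, d, f & r]]/([:: a;b;c;d;f] ++ r) cat_uniq => /andP[].
  by move: pth; rewrite -[[:: b, c, d, f & r]]/([:: b;c;d;f] ++ r) cat_path => /andP[].
Qed.

Theorem mainTheorem12 :
  (forall (V : finType) (e : rel V), symmetric e -> irreflexive e ->
     tree_in e [set: V] ->
     (~ has_full_star_cutset e <-> is_path_le4 e)) /\
  (forall (V : finType) (e : rel V) (c : V), symmetric e -> irreflexive e ->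
     chandelier e c ->
     (~ has_full_star_cutset e <-> luxury_chandelier e c)).
Proof.
split.
- move=> V e sy ir tr; split; first exact: part1f.
  exact: part1b.
- exact: part2.
Qed.
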